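(* Let $d\ge 2$ and $0<a<b\leq d$ be integers and $n\geq 1$. Then $$\ell_d^{(a,b)}(n)=\sum_{k=0}^{\lfloor (n-a)/d\rfloor}\binom{2k+n-a-dk}{n-a-dk}+\sum_{k=0}^{\lfloor (n-b)/d\rfloor}\binom{2k+1+n-b-dk}{n-b-dk},$$ where a sum with negative upper limit is empty.
   Context: A partition is a finite nonincreasing sequence of positive integers (its parts); its size is not fixed. The perimeter of a partition with largest part $\alpha$ and $\lambda$ parts is $\alpha+\lambda-1$. For $0<a<b\le d$, $\ell_d^{(a,b)}(n)$ is the number of partitions of perimeter $n$ all of whose parts are congruent to $a$ or $b$ modulo $d$. *)

(* Defs.v *)
From mathcomp Require Import all_boot.
Set Implicit Arguments. Unset Strict Implicit. Unset Printing Implicit Defensive.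

Definition is_partition (s : seq nat) : bool :=
  sorted geq s && all (fun x => 0 < x) s.

Definition largest_part (s : seq nat) : nat := foldr maxn 0 s.

Definition perimeter (s : seq nat) : nat := largest_part s + size s - 1.

Fixpoint all_seqs (m L : nat) : seq (seq nat) :=
  match L with
  | 0 => [:: [::]]
  | L'.+1 => [::] :: [seq x :: t | x <- iota 1 m, t <- all_seqs m L']
  end.

Definition parts_in (d a b : nat) (s : seq nat) : bool :=
  all (fun x => (x %% d == a %% d) || (x %% d == b %% d)) s.

(* A partition of perimeter n >= 1 has at most n
   parts, each at most n, so it occurs (exactly once) in all_seqs n n. *)
Definition ell (d a b n : nat) : nat :=
  count (fun s => [&& is_partition s, perimeter s == n & parts_in d a b s])
        (all_seqs n n).

(* Main.v *)
Require Import Defs.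
From mathcomp Require Import all_boot.
From mathcomp Require Import zify.
Set Implicit Arguments. Unset Strict Implicit.

Lemma count_allpairs_cons (P : pred (seq nat)) (s : seq nat) (u : seq (seq nat)) :
  count P [seq x :: t | x <- s, t <- u] = \sum_(x <- s) count (fun t => P (x :: t)) u.
Proof.
elim: s => [|x s IH]; first by rewrite big_nil.
by rewrite allpairs_cons count_cat count_map IH big_cons.
Qed.

Lemma count_all_seqsS (P : pred (seq nat)) m L :
  count P (all_seqs m L.+1) = P [::] + \sum_(x <- iota 1 m) count (fun t => P (x :: t)) (all_seqs m L).
Proof. by rewrite /= count_allpairs_cons. Qed.

Lemma count0 (T : Type) (P : pred T) s : (forall t, P t = false) -> count P s = 0.
Proof. by move=> H; rewrite (@eq_count _ _ pred0) ?count_pred0. Qed.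

Definition h (N r : nat) := 'C(N + r - 1, r).

Lemma hockey N r : h N r.+1 = \sum_(j < N) h j.+1 r.
Proof.
rewrite /h; elim: N => [|N IH]; first by rewrite big_ord0 bin_small //; lia.
rewrite big_ord_recr /= -IH.
have -> : N.+1 + r.+1 - 1 = (N + r).+1 by lia.
have -> : N + r.+1 - 1 = N + r by lia.
have -> : N.+1 + r - 1 = N + r by lia.
by rewrite binS.
Qed.

Section Gen.
Variable S : pred nat.
Definition Ncnt c := \sum_(1 <= y < c.+1) S y.

Lemma sum_reindex m c r : c <= m ->
  \sum_(x <- iota 1 m) ((S x && (x <= c)) * h (Ncnt x) r) = \sum_(j < Ncnt c) h j.+1 r.
Proof.
move=> cm.
have -> : m = c + (m - c) by lia.
rewrite iotaD big_cat /=.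
rewrite [X in _ + X]big1_seq ?addn0; last first.
  move=> x /andP[_]; rewrite mem_iota => /andP[h1 _].
  have -> : (x <= c) = false by lia.
  by rewrite andbF.
rewrite (eq_big_seq (fun x => S x * h (Ncnt x) r)); last first.
  move=> x; rewrite mem_iota => /andP[_ h2].
  by rewrite add1n ltnS in h2; rewrite h2 andbT.
clear cm; elim: c => [|c IH]; first by rewrite /Ncnt big_geq // big_ord0 big_nil.
rewrite (_ : iota 1 c.+1 = iota 1 c ++ [:: c.+1]); last by rewrite -{1}[c.+1]addn1 iotaD add1n.
rewrite big_cat big_seq1 /= IH.
have NS : Ncnt c.+1 = Ncnt c + S c.+1 by rewrite /Ncnt big_nat_recr.
rewrite NS.
case: (S c.+1) => /=; last by rewrite mul0n !addn0.
by rewrite addn1 big_ord_recr /= mul1n.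
Qed.

Definition fcnt m L c r :=
  count (fun s => [&& sorted geq s, all (fun y => S y && (y <= c)) s & size s == r]) (all_seqs m L).

Lemma fcnt_val r : forall m L c, c <= m -> r <= L -> fcnt m L c r = h (Ncnt c) r.
Proof.
elim: r => [|r IH] m L c cm rL.
  rewrite /fcnt /h addn0 bin0.
  case: L rL => [|L] _; first by [].
  rewrite count_all_seqsS /= big1 // => x _.
  by apply: count0 => t; rewrite !andbF.
case: L rL => [//|L] rL.
rewrite /fcnt count_all_seqsS /= add0n hockey -(sum_reindex r cm).
apply: eq_big_seq => x; rewrite mem_iota => /andP[_ xm].
case Sx: (S x); case xc: (x <= c) => /=; last first.
- by apply: count0 => t; rewrite !andbF.
- by apply: count0 => t; rewrite !andbF.
- by apply: count0 => t; rewrite !andbF.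
rewrite mul1n -(IH m L x); [|lia|lia].
rewrite /fcnt; apply: eq_count => t.
rewrite path_sortedE; last by move=> p q w /= h1 h2; first [exact: leq_trans h2 h1 | exact: leq_trans h1 h2].
rewrite eqSS.
case: (sorted geq t); rewrite ?andbT ?andbF //= andbA.
have -> : all (geq x) t && all (fun y => S y && (y <= c)) t = all (fun y => S y && (y <= x)) t.
  rewrite -all_predI; apply: eq_all => y /=.
  case: (S y); rewrite ?andbF //=.
  apply/idP/idP; [by case/andP|move=> yx; rewrite yx /=; lia].
by case: (all _ t).
Qed.
End Gen.

Definition Sp d a b (y : nat) := (0 < y) && ((y %% d == a %% d) || (y %% d == b %% d)).

Lemma largest_le x t : all (geq x) t -> largest_part t <= x.
Proof.
elim: t => [|y t IH] //= /andP[yx /IH tx].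
by rewrite geq_max yx tx.
Qed.

Lemma ell_sum d a b n : 1 <= n ->
  ell d a b n = \sum_(x <- iota 1 n) Sp d a b x * h (Ncnt (Sp d a b) x) (n - x).
Proof.
case: n => [//|n'] _.
rewrite /ell count_all_seqsS.
have -> : [&& is_partition [::], perimeter [::] == n'.+1 & parts_in d a b [::]] = false by [].
rewrite add0n; apply: eq_big_seq => x; rewrite mem_iota => /andP[x1 xn].
rewrite -(@fcnt_val (Sp d a b) (n'.+1 - x) n'.+1 n' x); [|lia|lia].
case Sx: (Sp d a b x); last first.
  rewrite mul0n; apply: count0 => t.
  move: Sx; rewrite /Sp x1 /= => Sx.
  by rewrite /is_partition /parts_in /= Sx !andbF.
rewrite mul1n /fcnt; apply: eq_count => t.
move: Sx; rewrite /Sp x1 /= => Sx.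
rewrite /is_partition /parts_in /perimeter /= Sx x1 /=.
rewrite path_sortedE; last by move=> p q w /= h1 h2; first [exact: leq_trans h2 h1 | exact: leq_trans h1 h2].
have -> : all (fun y => (0 < y) && ((y %% d == a %% d) || (y %% d == b %% d)) && (y <= x)) t
   = [&& all (geq x) t, all (fun y => 0 < y) t & all (fun y => (y %% d == a %% d) || (y %% d == b %% d)) t].
  rewrite -!all_predI; apply: eq_all => y /=.
  by case: (0 < y); case: (_ || _); case: (y <= x); rewrite /= ?andbF.
case A: (all (geq x) t); last by rewrite /= ?andbF.
have -> : maxn x (largest_part t) = x by apply/maxn_idPl; apply: largest_le.
have -> : (x + (size t).+1 - 1 == n'.+1) = (size t == n'.+1 - x) by apply/eqP/eqP; lia.
by case: (sorted _ _); case: (all _ t); case: (all _ t); rewrite /= ?andbF ?andbT.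
Qed.

Section Arith.
Variables d a b : nat.
Hypotheses (d2 : 2 <= d) (a0 : 0 < a) (ab : a < b) (bd : b <= d).

Lemma divE N q s : N = q * d + s -> s < d -> N %/ d = q.
Proof. move=> -> sd; rewrite divnMDl ?divn_small ?addn0 //; lia. Qed.

Definition Ea n := (n + d - a) %/ d.
Definition Eb n := (n + d - b) %/ d.

Lemma dvd_shift m c : c <= d -> (d %| m + d - c) = (m %% d == c %% d).
Proof.
move=> cd; rewrite -eqn_mod_dvd; last lia.
by rewrite modnDr.
Qed.

Lemma Ea_S n : Ea n.+1 = Ea n + (n.+1 %% d == a %% d).
Proof.
rewrite /Ea (_ : n.+1 + d - a = (n + d - a).+1); last lia.
rewrite divnS; last lia.
rewrite (_ : (n + d - a).+1 = n.+1 + d - a); last lia.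
rewrite dvd_shift; last lia.
by rewrite addnC.
Qed.

Lemma Eb_S n : Eb n.+1 = Eb n + (n.+1 %% d == b %% d).
Proof.
rewrite /Eb (_ : n.+1 + d - b = (n + d - b).+1); last lia.
rewrite divnS; last lia.
rewrite (_ : (n + d - b).+1 = n.+1 + d - b); last lia.
rewrite dvd_shift; last lia.
by rewrite addnC.
Qed.

Lemma amod : a %% d = a.
Proof. apply: modn_small; lia. Qed.

Lemma excl m : (m %% d == a %% d) -> (m %% d == b %% d) = false.
Proof.
rewrite amod => /eqP ->; apply/negbTE.
have [bd'|bd'] := ltnP b d.
  by rewrite modn_small //; lia.
have -> : b = d by lia.
by rewrite modnn; lia.
Qed.

Lemma Sp_split y : 0 < y -> Sp d a b y = (y %% d == a %% d) + (y %% d == b %% d) :> nat.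
Proof.
move=> y0; rewrite /Sp y0 /=.
case A: (y %% d == a %% d); first by rewrite excl.
by case: (_ == _).
Qed.

Lemma Ncnt_E x : Ncnt (Sp d a b) x = Ea x + Eb x.
Proof.
elim: x => [|x IH].
  rewrite /Ncnt big_geq // /Ea /Eb !add0n !divn_small //; lia.
rewrite /Ncnt big_nat_recr //= -/(Ncnt _ x) IH Ea_S Eb_S Sp_split //; lia.
Qed.

Lemma caseA n : (n.+1 %% d == a %% d) -> Eb n = Ea n /\ a + d * Ea n = n.+1.
Proof.
rewrite amod => /eqP hm.
have e := divn_eq n.+1 d; rewrite hm in e.
set q := n.+1 %/ d in e.
have hEa : Ea n = q by rewrite /Ea; apply: (divE (s := d - 1)); lia.
have hEb : Eb n = q by rewrite /Eb; apply: (divE (s := a - 1 + d - b)); lia.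
rewrite hEa hEb; split => //; lia.
Qed.

Lemma caseB n : (n.+1 %% d == b %% d) -> Ea n = Eb n + 1 /\ b + d * Eb n = n.+1.
Proof.
move=> /eqP hm.
have e := divn_eq n.+1 d; rewrite hm in e.
set q := n.+1 %/ d in e.
have [bd'|bd'] := ltnP b d.
  rewrite modn_small // in e.
  have hEa : Ea n = q.+1 by rewrite /Ea; apply: (divE (s := b - 1 - a)); lia.
  have hEb : Eb n = q by rewrite /Eb; apply: (divE (s := d - 1)); lia.
  rewrite hEa hEb; split; lia.
have bE : b = d by lia.
rewrite bE modnn in e.
move: e; case: q => [|q] e; first by lia.
have hEa : Ea n = q.+1 by rewrite /Ea; apply: (divE (s := d - 1 - a)); lia.
have hEb : Eb n = q by rewrite /Eb; apply: (divE (s := d - 1)); lia.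
rewrite hEa hEb; split; lia.
Qed.
End Arith.

Lemma sum_split d a b (phi : nat -> nat -> nat) n :
  2 <= d -> 0 < a -> a < b -> b <= d ->
  \sum_(x <- iota 1 n) Sp d a b x * phi (Ncnt (Sp d a b) x) x =
  \sum_(0 <= k < Ea d a n) phi k.*2.+1 (a + d * k) +
  \sum_(0 <= k < Eb d b n) phi k.*2.+2 (b + d * k).
Proof.
move=> d2 a0 ab bd.
elim: n => [|n IH].
  by rewrite big_nil /Ea /Eb !add0n !divn_small ?big_geq //; lia.
rewrite (_ : iota 1 n.+1 = iota 1 n ++ [:: n.+1]); last by rewrite -{1}[n.+1]addn1 iotaD add1n.
rewrite big_cat big_seq1 /= IH (Ncnt_E d2 a0 ab bd) (Ea_S d2 a0 ab bd) (Eb_S d2 a0 ab bd) (Sp_split d2 a0 ab bd) //.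
case A: (n.+1 %% d == a %% d).
  rewrite (excl d2 a0 ab bd) //= addn0 mul1n.
  have [h1 h2] := caseA d2 a0 ab bd A.
  rewrite !addn0 addn1 big_nat_recr //= h1 h2.
  rewrite (_ : (Ea d a n).+1 + Ea d a n = (Ea d a n).*2.+1); last lia.
  by rewrite addnAC.
case B: (n.+1 %% d == b %% d) => /=; last by rewrite (_ : forall y, (false + false) * y = 0) // !addn0.
rewrite !addn0 add0n mul1n addn1 big_nat_recr //=.
have [h1 h2] := caseB d2 a0 ab bd B.
rewrite h1 h2 (_ : Eb d b n + 1 + (Eb d b n).+1 = (Eb d b n).*2.+2); last lia.
by rewrite addnA.
Qed.

Theorem mainTheorem9 (d a b n : nat) :
  2 <= d -> 0 < a -> a < b -> b <= d -> 1 <= n ->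
  ell d a b n =
    \sum_(0 <= k < (if a <= n then ((n - a) %/ d).+1 else 0))
        'C(2 * k + (n - a - d * k), n - a - d * k)
  + \sum_(0 <= k < (if b <= n then ((n - b) %/ d).+1 else 0))
        'C(2 * k + 1 + (n - b - d * k), n - b - d * k).
Proof.
move=> d2 a0 ab bd n1.
rewrite ell_sum // (sum_split (fun N x => h N (n - x))) //.
have bnd : forall c, 0 < c <= d ->
   (if c <= n then ((n - c) %/ d).+1 else 0) = (n + d - c) %/ d.
  move=> c /andP[c0 cd].
  case: ifP => cn.
    by symmetry; apply: (divE d2 a0 ab bd (s := (n - c) %% d)); [have e := divn_eq (n - c) d; lia | apply: ltn_pmod; lia].
  by rewrite divn_small //; lia.
rewrite bnd; last lia.
rewrite bnd; last lia.
rewrite /Ea /Eb /h.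
congr (_ + _); apply: eq_bigr => k _; congr 'C(_, _); lia.
Qed.
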